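(* Assume $V=L$. If $\zeta\in\Xi$ and $X\in\mathrm{IPS}_\zeta$, then there is a uniform set $Y\in\mathrm{IPS}_\zeta$ with $Y\subseteq X$.
   Context: $T$ is the set of all nonempty finite sequences of countable ordinals, ordered by strict extension $\subset$. $\Xi$ is the set of all at most countable $\xi\subseteq T$ closed downward under $\subset$. $D=2^\omega$; $D^\xi$ is the product of $\xi$ copies of $D$ with the product topology; for $\eta\subseteq\xi$ and $x\in D^\xi$, $x\restriction\eta$ is the restriction. For $\zeta\in\Xi$, $\mathrm{IPS}_\zeta$ is the set of all $X\subseteq D^\zeta$ for which there is a homeomorphism $H$ of $D^\zeta$ onto $X$ such that for all $x_0,x_1\in D^\zeta$ and all $\xi\in\Xi$, $\xi\subseteq\zeta$: $x_0\restriction\xi=x_1\restriction\xi\iff H(x_0)\restriction\xi=H(x_1)\restriction\xi$. A set $Y\in\mathrm{IPS}_\zeta$ is uniform if for all $i\subset j$ in $\zeta$ and all $x,y\in Y$: $x(j)=y(j)$ implies $x(i)=y(i)$. *)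

(* Defs.v *)
From HB Require Import structures.
From mathcomp Require Import all_boot all_algebra.
From mathcomp Require Import all_classical all_reals all_analysis.
Set Implicit Arguments. Unset Strict Implicit. Unset Printing Implicit Defensive.
Import numFieldTopology.Exports.
Local Open Scope classical_set_scope.

(* Labels: the paper uses countable ordinals; we work with an arbitrary
   label type Lab. *)

Definition sext {Lab : Type} (s t : seq Lab) : Prop :=
  exists u : seq Lab, u <> [::] /\ t = s ++ u.

Definition Tset (Lab : Type) : set (seq Lab) := [set t : seq Lab | t <> [::]].

Definition inXi {Lab : Type} (xi : set (seq Lab)) : Prop :=
  [/\ xi `<=` @Tset Lab, countable xi &
      forall s t, xi t -> s <> [::] -> sext s t -> xi s].

Definition D := cantor_space.

Definition Dpow {Lab : Type} (zeta : set (seq Lab)) : Type :=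
  prod_topology (fun _ : {t : seq Lab | zeta t} => D).

Definition restr_eq {Lab : Type} (zeta xi : set (seq Lab)) (x y : Dpow zeta) : Prop :=
  forall t : {t : seq Lab | zeta t}, xi (proj1_sig t) -> x t = y t.

Definition homeo_onto {Lab : Type} (zeta : set (seq Lab))
    (H : Dpow zeta -> Dpow zeta) (X : set (Dpow zeta)) : Prop :=
  [/\ continuous H, injective H, range H = X &
      exists G : Dpow zeta -> Dpow zeta,
        {within X, continuous G} /\ (forall x, G (H x) = x)].

Definition IPS {Lab : Type} (zeta : set (seq Lab)) (X : set (Dpow zeta)) : Prop :=
  exists H : Dpow zeta -> Dpow zeta,
    homeo_onto H X /\
    forall (x0 x1 : Dpow zeta) (xi : set (seq Lab)),
      inXi xi -> xi `<=` zeta ->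
      (restr_eq xi x0 x1 <-> restr_eq xi (H x0) (H x1)).

Definition uniform {Lab : Type} (zeta : set (seq Lab)) (Y : set (Dpow zeta)) : Prop :=
  forall (i j : {t : seq Lab | zeta t}), sext (proj1_sig i) (proj1_sig j) ->
    forall x y, Y x -> Y y -> x j = y j -> x i = y i.

(* Main.v *)
Require Import Defs.
From Stdlib Require List.
From HB Require Import structures.
From mathcomp Require Import all_boot all_algebra.
From mathcomp Require Import all_classical all_reals all_analysis.
Local Open Scope classical_set_scope.

Module Helpers.
Set Implicit Arguments. Unset Strict Implicit. Unset Printing Implicit Defensive.
Import numFieldTopology.Exports.

Section ProdBox.
Variables (J : Type) (T : topologicalType).
Local Notation PT := (prod_topology (fun _ : J => T)).

Definition boxF (x : PT) : set_system PT :=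
  [set A | exists (S : seq J) (B : J -> set T),
     (forall j, nbhs (x j) (B j)) /\
     [set y : PT | forall j, List.In j S -> B j (y j)] `<=` A].

Lemma boxF_filter (x : PT) : Filter (boxF x).
Proof.
split.
- exists [::], (fun _ => setT); split => //. move=> j; exact: filterT.
- move=> A1 A2 [S1 [B1 [hB1 s1]]] [S2 [B2 [hB2 s2]]].
  exists (S1 ++ S2), (fun j => B1 j `&` B2 j); split.
    move=> j; exact: filterI.
  move=> y hy; split.
    apply: s1 => j hj; have [] := hy j (List.in_or_app _ _ _ (or_introl hj)); done.
  apply: s2 => j hj; have [] := hy j (List.in_or_app _ _ _ (or_intror hj)); done.
- move=> A1 A2 sub [S [B [hB s]]]; exists S, B; split => //.
  by move=> y /s /sub.
Qed.

Lemma prod_nbhs_box (x : PT) (A : set PT) : nbhs x A ->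
  exists (S : seq J) (B : J -> set T),
     (forall j, nbhs (x j) (B j)) /\
     [set y : PT | forall j, List.In j S -> B j (y j)] `<=` A.
Proof.
move=> hA.
suff : boxF x --> x by move=> /(_ A hA).
have Ff := boxF_filter x.
apply/cvg_sup => i U /=.
move=> hU.
have := @nbhsE (initial_topology (fun f : PT => f i)) x.
move=> E; rewrite E in hU; case: hU => B [oB Bx] BU.
case: oB => C oC CB.
exists [:: i], (fun j => [set t | j = i -> C t]); split.
  move=> j; have [->|nji] := pselect (j = i).
    apply: (@filterS _ _ _ C); first by move=> t Ct _.
    apply: open_nbhs_nbhs; split => //.
    by move: Bx; rewrite -CB.
  by apply: nearW => t /nji.
move=> y hy; apply: BU; rewrite -CB /=.
by apply: hy; [left|].
Qed.
End ProdBox.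

Definition cyl (d : D) (L : nat) : set D := [set y : D | forall m, (m < L)%N -> y m = d m].

Lemma D_nbhs_cyl (d : D) (A : set D) : nbhs d A -> exists L, cyl d L `<=` A.
Proof.
move=> /(@prod_nbhs_box nat bool) [S [B [hB sub]]].
exists (foldr maxn 0 S).+1 => y hy; apply: sub => m hm.
rewrite hy; first exact: nbhs_singleton (hB m).
clear hy; elim: S hm => //= a S IH [->|/IH h]; rewrite ltnS.
  exact: leq_maxl.
by apply: leq_trans (leq_maxr _ _); rewrite -ltnS.
Qed.

Lemma D_bit_nbhs (d : D) m : nbhs d [set y : D | y m = d m].
Proof.
have := @proj_continuous nat (fun _ => bool) m d.
move=> /(_ [set d m]) h; apply: h.
by apply/principal_filterP.
Qed.

Section PBox.
Variables (Lab : Type) (zeta : set (seq Lab)).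
Local Notation I := {t : seq Lab | zeta t}.
Local Notation P := (Dpow zeta).

Definition box (z : P) (S : seq I) (L : nat) : set P :=
  [set y : P | forall i, List.In i S -> forall m, (m < L)%N -> y i m = z i m].

Lemma P_nbhs_box (z : P) (A : set P) : nbhs z A -> exists S L, box z S L `<=` A.
Proof.
move=> /(@prod_nbhs_box I D) [S [B [hB sub]]].
pose Li i := projT1 (cid (D_nbhs_cyl (hB i))).
have hLi i : cyl (z i) (Li i) `<=` B i := projT2 (cid (D_nbhs_cyl (hB i))).
exists S, (foldr (fun i acc => maxn (Li i) acc) 0 S) => y hy; apply: sub => i hi.
apply: hLi => m hm; apply: hy => //.
apply: leq_trans hm _; elim: S hi => //= a S IH [<-|/IH h].
  exact: leq_maxl.
by apply: leq_trans h (leq_maxr _ _).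
Qed.

Lemma P_bit_nbhs (z : P) i m : nbhs z [set y : P | y i m = z i m].
Proof.
have := @proj_continuous {classic I} (fun _ => D) i z.
move=> /(_ [set y : D | y m = z i m]) h; apply: h.
exact: D_bit_nbhs.
Qed.

Lemma box_nbhs (z : P) S L : nbhs z (box z S L).
Proof.
elim: S => [|a S IH].
  by apply: (@filterS _ (nbhs z) _ setT) => //; [move=> y _ i []|exact: filterT].
have ha : nbhs z [set y : P | forall m, (m < L)%N -> y a m = z a m].
  elim: L {IH} => [|L IHL].
    by apply: (@filterS _ (nbhs z) _ setT) => //; exact: filterT.
  apply: filterS (filterI IHL (P_bit_nbhs z a L)) => y [h1 h2] m.
  by rewrite ltnS leq_eqVlt => /orP[/eqP->|/h1].
apply: filterS (filterI IH ha) => y [h1 h2] i [<-|hi] m hm; last exact: h1.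
exact: h2.
Qed.


Lemma cont_of_bits (f : P -> P) :
  (forall x j m, nbhs x [set y | f y j m = f x j m]) -> continuous f.
Proof.
move=> hf x A /P_nbhs_box [S [L sub]].
suff : nbhs x (f @^-1` box (f x) S L).
  by move=> h; apply: (filterS _ h) => y /sub.
elim: S {sub} => [|a S IH].
  by apply: (@filterS _ (nbhs x) _ setT) => //; [move=> y _ i []|exact: filterT].
have ha : nbhs x [set y : P | forall m, (m < L)%N -> f y a m = f x a m].
  elim: L {IH} => [|L IHL].
    by apply: (@filterS _ (nbhs x) _ setT) => //; exact: filterT.
  apply: filterS (filterI IHL (hf x a L)) => y [h1 h2] m.
  by rewrite ltnS leq_eqVlt => /orP[/eqP->|/h1].
apply: filterS (filterI IH ha) => y [h1 h2] i [<-|hi] m hm; last exact: h1.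
exact: h2.
Qed.

Lemma bits_of_cont (f : P -> P) : continuous f ->
  forall x j m, nbhs x [set y | f y j m = f x j m].
Proof.
move=> cf x j m; have := cf x [set y : P | y j m = f x j m] (P_bit_nbhs (f x) j m).
done.
Qed.

Lemma cont_box (f : P -> P) : continuous f ->
  forall x j m, exists S L, forall y, box x S L y -> f y j m = f x j m.
Proof.
move=> cf x j m; have /P_nbhs_box [S [L sub]] := bits_of_cont cf x j m.
by exists S, L => y /sub.
Qed.

Lemma P_compact : compact [set: P].
Proof.
have := @tychonoff {classic I} (fun _ => D) (fun _ => setT) (fun=> cantor_space_compact).
by congr (compact _); rewrite eqEsubset.
Qed.

Lemma P_hausdorff : hausdorff_space P.
Proof.
apply: (@hausdorff_product {classic I} (fun _ => D)) => ?.
exact: cantor_space_hausdorff.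
Qed.

Lemma homeo_of_compact (M : P -> P) : continuous M -> injective M ->
  exists G : P -> P, {within range M, continuous G} /\ (forall x, G (M x) = x).
Proof.
move=> cM iM.
pose x0 : P := fun _ _ => false.
pose G := fun y => xget x0 [set x | M x = y].
have GM x : G (M x) = x.
  apply: iM; rewrite /G; exact: (@xgetPex _ x0 [set x' | M x' = M x] (ex_intro _ x erefl)).
exists G; split => //.
apply/subspace_continuousP => _ [x _ <-].
rewrite /from_subspace GM => t.
rewrite nbhsE => -[B [oB Bx] Bt].
have cC : closed (~` B) by exact: open_closedC.
have kK : compact (M @` (~` B)).
  apply: continuous_compact; first exact: continuous_subspaceT.
  apply: (subclosed_compact cC P_compact); done.
have clK : closed (M @` (~` B)) := compact_closed P_hausdorff kK.
have : nbhs (M x) (~` (M @` (~` B))).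
  apply: open_nbhs_nbhs; split; first exact: closed_openC.
  by move=> [x' nBx' /iM ex]; apply: nBx'; rewrite ex.
rewrite /within /=; apply: filterS => y nK [x' _ ex'].
rewrite /= -ex'.
have -> : G (M x') = x' by exact: GM.
apply: Bt; apply: contrapT => nB; apply: nK.
by exists x'.
Qed.
End PBox.


Definition spt (c : D) (L k : nat) : D := fun m => if (m < L)%N then c m else (m == L + k)%N.

Lemma spt_inj c L : injective (spt c L).
Proof.
move=> k k' e; have := congr1 (fun f : D => f (L + k)%N) e.
by rewrite /spt ltnNge leq_addr /= eqxx => /esym/eqP/addnI.
Qed.

Lemma spt_cyl c L k : cyl c L (spt c L k).
Proof. by move=> m hm; rewrite /spt hm. Qed.

Lemma select_list (A : eqType) (c : A -> D) (L : nat) (G : A -> D -> D) :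
  (forall a, injective (G a)) -> forall l : seq A,
  exists phi : A -> D, (forall a, cyl (c a) L (phi a)) /\
    (forall a b, a \in l -> b \in l -> a != b -> G a (phi a) <> G b (phi b)).
Proof.
move=> Ginj; elim=> [|a l [phi [hc hd]]].
  by exists c; split => // a m.
have [al|nal] := boolP (a \in l).
  exists phi; split => // x y; rewrite !inE.
  by move=> /orP[/eqP->|hx] /orP[/eqP->|hy]; apply: hd.
pose V := [set G b (phi b) | b in [set` l]].
have fV : finite_set V by apply: finite_image; exact: finite_seq.
have fK : finite_set ((fun k => G a (spt (c a) L k)) @^-1` V).
  apply: finite_preimage => // k k' _ _ /Ginj; exact: spt_inj.
have [k nk] : exists k, ~ V (G a (spt (c a) L k)).
  apply: contrapT => hn; apply: infinite_nat; apply: sub_finite_set fK.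
  by move=> k _; apply: contrapT => h; apply: hn; exists k.
exists (fun b => if b == a then spt (c a) L k else phi b); split.
  by move=> b; case: eqP => [->|_]; [exact: spt_cyl|exact: hc].
move=> x y; rewrite !inE => hx hy nxy.
have hl z : z \in l -> (z == a) = false.
  by move=> zl; apply/eqP => eza; move: nal; rewrite -eza zl.
case/orP: hx => [/eqP ex|hx]; case/orP: hy => [/eqP ey|hy].
- by subst; rewrite eqxx in nxy.
- subst x; rewrite eqxx hl // => e; apply: nk; rewrite e; by exists y.
- subst y; rewrite eqxx hl // => e; apply: nk; rewrite -e; by exists x.
- by rewrite !hl //; apply: hd.
Qed.

Lemma select_fin (A : finType) (c : A -> D) (L : nat) (G : A -> D -> D) :
  (forall a, injective (G a)) ->
  exists phi : A -> D, (forall a, cyl (c a) L (phi a)) /\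
    (forall a b, a != b -> G a (phi a) <> G b (phi b)).
Proof.
move=> Ginj; have [phi [h1 h2]] := select_list c L Ginj (enum A).
by exists phi; split => // a b; apply: h2; rewrite mem_enum.
Qed.


Section Prefix.
Variables (Lab : Type) (zeta : set (seq Lab)).
Hypothesis hz : inXi zeta.
Local Notation I := {t : seq Lab | zeta t}.
Local Notation P := (Dpow zeta).

Lemma I_inj (i j : I) : sval i = sval j -> i = j.
Proof.
case: i j => [a ha] [b hb] /= e; subst b; congr exist; exact: Prop_irrelevance.
Qed.

Lemma I_ne (i : I) : sval i <> [::].
Proof. by case: hz => hT _ _; apply: hT; exact: (svalP i). Qed.

Definition pre (i j : I) := exists u, sval j = sval i ++ u.

Lemma pre_refl (i : I) : pre i i.
Proof. by exists [::]; rewrite cats0. Qed.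

Lemma pre_trans (i j k : I) : pre i j -> pre j k -> pre i k.
Proof. by move=> [u eu] [v ev]; exists (u ++ v); rewrite ev eu catA. Qed.

Lemma pre_size (i j : I) : pre i j -> (size (sval i) <= size (sval j))%N.
Proof. by move=> [u ->]; rewrite size_cat leq_addr. Qed.

Lemma sext_size (s t : seq Lab) : sext s t -> (size s < size t)%N.
Proof.
move=> [u [nu ->]]; rewrite size_cat -{1}(addn0 (size s)) ltn_add2l.
by case: u nu.
Qed.

Lemma pre_cases (i j : I) : pre i j -> i = j \/ sext (sval i) (sval j).
Proof.
move=> [[|a u] e]; first by left; apply: I_inj; rewrite e cats0.
by right; exists (a :: u).
Qed.

Lemma sext_pre (i j : I) : sext (sval i) (sval j) -> pre i j.
Proof. by move=> [u [_ e]]; exists u. Qed.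

Lemma sext_neq (i j : I) : sext (sval i) (sval j) -> i <> j.
Proof. by move=> /sext_size h e; rewrite e ltnn in h. Qed.

Definition dnS (j : I) : set (seq Lab) :=
  [set s | s <> [::] /\ exists u, sval j = s ++ u].
Definition sdnS (j : I) : set (seq Lab) := [set s | s <> [::] /\ sext s (sval j)].

Lemma dnS_zeta (j : I) : dnS j `<=` zeta.
Proof.
move=> s [ns [[|a u] e]].
  by rewrite cats0 in e; rewrite -e; exact: (svalP j).
case: hz => _ _ hcl; apply: (hcl s (sval j)) => //; first exact: (svalP j).
by exists (a :: u).
Qed.

Lemma dnS_fin (j : I) : finite_set (dnS j).
Proof.
apply: (@sub_finite_set _ _ [set take k (sval j) | k in `I_(size (sval j)).+1]).
  move=> s [_ [u e]]; exists (size s); last by rewrite e take_size_cat.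
  by rewrite /= e size_cat ltnS leq_addr.
apply: finite_image; exact: finite_II.
Qed.

Lemma dnS_Xi (j : I) : inXi (dnS j).
Proof.
split.
- by move=> s [].
- exact: finite_set_countable (dnS_fin j).
- move=> s t [nt [u e]] ns [v [_ et]]; split => //.
  by exists (v ++ u); rewrite e et catA.
Qed.

Lemma sdnS_sub (j : I) : sdnS j `<=` dnS j.
Proof. by move=> s [ns [u [_ e]]]; split => //; exists u. Qed.

Lemma sdnS_zeta (j : I) : sdnS j `<=` zeta.
Proof. by move=> s /sdnS_sub /dnS_zeta. Qed.

Lemma sext_trans (s t r : seq Lab) : sext s t -> sext t r -> sext s r.
Proof.
move=> [v [nv ->]] [u [_ ->]]; exists (v ++ u); split; last by rewrite catA.
by case: v nv.
Qed.

Lemma sdnS_Xi (j : I) : inXi (sdnS j).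
Proof.
split.
- by move=> s [].
- apply: finite_set_countable; apply: sub_finite_set (dnS_fin j); exact: sdnS_sub.
- move=> s t [nt et] ns st; split => //; exact: sext_trans st et.
Qed.

Lemma restr_dnE (z z' : P) (j : I) :
  restr_eq (dnS j) z z' <-> (forall i, pre i j -> z i = z' i).
Proof.
split=> h i.
  by move=> hp; apply: h; split; [exact: I_ne|exact: hp].
by move=> [_ hp]; apply: h.
Qed.

Lemma restr_sdnE (z z' : P) (j : I) :
  restr_eq (sdnS j) z z' <-> (forall i, sext (sval i) (sval j) -> z i = z' i).
Proof.
split=> h i.
  by move=> hp; apply: h; split; [exact: I_ne|exact: hp].
by move=> [_ hp]; apply: h.
Qed.

Definition upd (z : P) (j : I) (s : D) : P :=
  fun i => if pselect (i = j) then s else z i.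

Lemma upd_at (z : P) (j : I) s : upd z j s j = s.
Proof. by rewrite /upd; case: pselect. Qed.

Lemma upd_ne (z : P) (j : I) s (i : I) : i <> j -> upd z j s i = z i.
Proof. by rewrite /upd; case: pselect. Qed.

Definition Bx (p : P) (j : I) (L : nat) : set P :=
  [set w : P | forall i, pre i j -> forall m, (m < L)%N -> w i m = p i m].

Section HFacts.
Variable H : P -> P.
Hypothesis cH : continuous H.
Hypothesis iH : forall (x0 x1 : P) (xi : set (seq Lab)),
      inXi xi -> xi `<=` zeta ->
      (restr_eq xi x0 x1 <-> restr_eq xi (H x0) (H x1)).

Lemma F1 (z z' : P) (j : I) : (forall i, pre i j -> z i = z' i) -> H z j = H z' j.
Proof.
move=> h; have := (iH z z' (xi:=dnS j) (@dnS_Xi j) (@dnS_zeta j)).1.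
rewrite !restr_dnE => /(_ h); apply; exact: pre_refl.
Qed.

Lemma F1' (z z' : P) (j : I) : (forall i, pre i j -> z i = z' i) ->
  forall i, pre i j -> H z i = H z' i.
Proof.
move=> h i hij; apply: F1 => k hk; apply: h; exact: pre_trans hk hij.
Qed.

Lemma F2 (z z' : P) (j : I) : (forall i, sext (sval i) (sval j) -> z i = z' i) ->
  z j <> z' j -> H z j <> H z' j.
Proof.
move=> h nj eH; apply: nj.
have hs := (iH z z' (xi:=sdnS j) (@sdnS_Xi j) (@sdnS_zeta j)).1.
rewrite !restr_sdnE in hs; have {}hs := hs h.
have := (iH z z' (xi:=dnS j) (@dnS_Xi j) (@dnS_zeta j)).2.
rewrite !restr_dnE; apply; last exact: pre_refl.
by move=> i /pre_cases [->|/hs].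
Qed.

Lemma upd_inj (z : P) (j : I) : injective (fun s => H (upd z j s) j).
Proof.
move=> s s' /= e; apply: contrapT => ns; apply: (F2 (z:=upd z j s) (z':=upd z j s') (j:=j)) => //.
  by move=> i /sext_neq hi; rewrite !upd_ne.
by rewrite !upd_at.
Qed.

Lemma H_stab (p : P) (j : I) m : exists L0, forall L1 w, (L0 <= L1)%N ->
  Bx p j L1 w -> H w j m = H p j m.
Proof.
have [S [L0 hb]] := cont_box cH p j m.
exists L0 => L1 w hL hw.
pose y : P := fun i => if pselect (pre i j) then w i else p i.
have -> : H w j = H y j by apply: F1 => i hi; rewrite /y; case: pselect.
apply: hb => i _ m' hm'; rewrite /y; case: pselect => // hi.
by apply: hw => //; apply: leq_trans hm' hL.
Qed.

End HFacts.
End Prefix.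


Section Addr.
Variables (Lab : Type) (zeta : set (seq Lab)).
Hypothesis hz : inXi zeta.
Local Notation I := {t : seq Lab | zeta t}.
Local Notation P := (Dpow zeta).

Lemma pk_proof (j : I) (t : 'I_(size (sval j))) : zeta (take t.+1 (sval j)).
Proof.
apply: (dnS_zeta hz (j:=j)); split.
  move=> e; have := congr1 size e; rewrite size_take /=.
  case: ifP => // _ hs; move: (ltn_ord t); rewrite [X in (_ < X)%N -> _]hs.
  done.
by exists (drop t.+1 (sval j)); rewrite cat_take_drop.
Qed.

Lemma size_pos (j : I) : (0 < size (sval j))%N.
Proof. by case: (sval j) (@I_ne _ _ hz j). Qed.

Definition idx (j : I) (k : nat) : 'I_(size (sval j)) := insubd (Ordinal (size_pos j)) k.

Lemma idxK (j : I) k : (k < size (sval j))%N -> nat_of_ord (idx j k) = k.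
Proof. by move=> h; rewrite /idx val_insubd h. Qed.

Definition pk (j : I) (t : 'I_(size (sval j))) : I := exist _ _ (pk_proof t).

Lemma pk_pre (j : I) t : pre (@pk j t) j.
Proof. by exists (drop t.+1 (sval j)); rewrite /= cat_take_drop. Qed.

Lemma pk_size (j : I) t : size (sval (@pk j t)) = t.+1.
Proof. by rewrite /= size_take; case: ltnP => // h; apply/eqP; rewrite eqn_leq h (ltn_ord t). Qed.

Lemma pre_pk (i j : I) : pre i j -> i = @pk j (idx j (size (sval i)).-1).
Proof.
move=> hp; have hs := pre_size hp.
have hi : (0 < size (sval i))%N by case: (sval i) (@I_ne _ _ hz i).
apply: I_inj => /=.
rewrite idxK; last by rewrite prednK.
rewrite prednK //; case: hp => u ->; by rewrite take_size_cat.
Qed.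

Definition eqv (n : nat) (j : I) (x x' : P) :=
  forall i, pre i j -> forall m, (m < n)%N -> x i m = x' i m.

Lemma eqv_sym n j x x' : eqv n j x x' -> eqv n j x' x.
Proof. by move=> h i hi m hm; rewrite h. Qed.

Lemma eqv_trans n j x y z : eqv n j x y -> eqv n j y z -> eqv n j x z.
Proof. by move=> h1 h2 i hi m hm; rewrite h1 // h2. Qed.

Lemma eqv_pre n (i j : I) x x' : pre i j -> eqv n j x x' -> eqv n i x x'.
Proof. by move=> hij h k hk; apply: h; exact: pre_trans hk hij. Qed.

Lemma eqv_le n n' j x x' : (n' <= n)%N -> eqv n j x x' -> eqv n' j x x'.
Proof. by move=> hn h i hi m hm; apply: h => //; apply: leq_trans hm hn. Qed.

Definition A (n : nat) (j : I) := {ffun 'I_(size (sval j)) * 'I_n -> bool}.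

Definition addr n (j : I) (x : P) : A n j := [ffun tm : 'I_(size (sval j)) * 'I_n => x (@pk j tm.1) tm.2].

Definition rep n (j : I) (a : A n j) : P := fun i m =>
  if pselect (pre i j) then
    (if @insub _ (fun k => k < n)%N _ m is Some mo then a (idx j (size (sval i)).-1, mo) else false)
  else false.

Lemma addr_eq n j x x' : eqv n j x x' -> addr n j x = addr n j x'.
Proof.
move=> h; apply/ffunP => -[t m]; rewrite !ffunE /=.
apply: h => //; exact: pk_pre.
Qed.

Lemma addr_eqv n j x x' : addr n j x = addr n j x' -> eqv n j x x'.
Proof.
move=> h i hi m hm.
have := congr1 (fun f : A n j => f (idx j (size (sval i)).-1, Ordinal hm)) h.
by rewrite !ffunE /= -pre_pk.
Qed.

Lemma addr_rep n j (a : A n j) : addr n j (rep a) = a.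
Proof.
apply/ffunP => -[t m]; rewrite ffunE /= /rep.
case: pselect => [hp|hp]; last by exfalso; apply: hp; exact: pk_pre.
rewrite insubT /=; first exact: ltn_ord.
move=> hm; rewrite pk_size /=; congr (a (_, _)).
  by apply: val_inj; rewrite /= idxK.
exact: val_inj.
Qed.

Lemma rep_eqv n j x : eqv n j x (rep (addr n j x)).
Proof. apply: addr_eqv; by rewrite addr_rep. Qed.

End Addr.


Section Fusion.
Variables (Lab : Type) (zeta : set (seq Lab)).
Hypothesis hz : inXi zeta.
Local Notation I := {t : seq Lab | zeta t}.
Local Notation P := (Dpow zeta).
Variable H : P -> P.
Hypothesis cH : continuous H.
Hypothesis iH : forall (x0 x1 : P) (xi : set (seq Lab)),
      inXi xi -> xi `<=` zeta ->
      (restr_eq xi x0 x1 <-> restr_eq xi (H x0) (H x1)).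
Variable e : nat -> I.

Definition inF (n : nat) (j : I) := exists k, (k < n)%N /\ pre j (e k).

Local Notation rep := (@rep _ _ hz _ _).
Local Notation addr := (@addr _ _ hz).

Lemma level n (Z : P -> P) L :
  (forall j x x', eqv n j x x' -> Z x j = Z x' j) -> forall l,
  exists Z' : P -> P, [/\ (forall j x x', eqv n.+1 j x x' -> Z' x j = Z' x' j),
    (forall x j m, (m < L)%N -> Z' x j m = Z x j m) &
    (forall j, inF n.+1 j -> (size (sval j) <= l)%N -> forall x x',
       ~ eqv n.+1 j x x' -> H (Z' x) j <> H (Z' x') j)].
Proof.
move=> S1; elim=> [|l [Z' [a b c]]].
  exists Z; split => //.
    move=> j x x' h; apply: S1; exact: eqv_le (leqnSn n) h.
  move=> j _ hj; exfalso; have := size_pos hz j; by rewrite ltnNge hj.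
have sel : forall j : I, {phi : A n.+1 j -> D |
    (forall a, cyl (Z (rep a) j) L (phi a)) /\
    (forall a b, a != b -> H (upd (Z' (rep a)) j (phi a)) j <>
                           H (upd (Z' (rep b)) j (phi b)) j)}.
  move=> j; apply: cid.
  apply: (@select_fin _ (fun a => Z (rep a) j) L
                     (fun a s => H (upd (Z' (rep a)) j s) j)).
  by move=> a0; exact: (upd_inj hz iH).
pose lev j := inF n.+1 j /\ size (sval j) = l.+1.
pose Z'' := fun x j => if pselect (lev j) then proj1_sig (sel j) (addr n.+1 j x)
                       else Z' x j.
have nlev : forall i : I, (size (sval i) <= l)%N -> ~ lev i.
  move=> i hi; rewrite /lev => -[_ e']; by move: hi; rewrite e' ltnn.
have key : forall j x, lev j -> H (Z'' x) j =
    H (upd (Z' (rep (addr n.+1 j x))) j (proj1_sig (sel j) (addr n.+1 j x))) j.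
  move=> j x hj; apply: (F1 hz iH) => i hi.
  case: (pre_cases hi) => [->|hs].
    by rewrite upd_at /Z''; case: pselect.
  rewrite upd_ne; last exact: sext_neq.
  have nli : ~ lev i.
    apply: (nlev i); have := sext_size hs; rewrite (proj2 hj) ltnS; done.
  rewrite /Z''; case: pselect => [hl|hl]; first by exfalso; exact: nli hl.
  apply: a; apply: eqv_pre (sext_pre hs) _. exact: (rep_eqv hz _).
exists Z''; split.
- move=> j x x' h; rewrite /Z''; case: pselect => hl; last exact: a.
  by rewrite (addr_eq hz h).
- move=> x j m hm; rewrite /Z''; case: pselect => hj; last exact: b.
  have hc := proj1 (proj2_sig (sel j)) (addr n.+1 j x) m hm; rewrite /= hc.
  congr (_ m); apply: S1; apply: eqv_sym; apply: eqv_le (leqnSn n) _.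
  exact: (rep_eqv hz x).
- move=> j hF hs x x' nx.
  rewrite leq_eqVlt in hs; case/orP: hs => [/eqP hs|hs].
    have hj : lev j by [].
    rewrite !key //; apply: (proj2 (proj2_sig (sel j))).
    by apply/eqP => e'; apply: nx; exact: addr_eqv e'.
  rewrite ltnS in hs.
  have E y : H (Z'' y) j = H (Z' y) j.
    apply: (F1 hz iH) => i hi; rewrite /Z''; case: pselect => // hl.
    by exfalso; apply: (nlev i) hl; apply: leq_trans (pre_size hi) hs.
  by rewrite !E; apply: c.
Qed.


Definition Inv n (Z : P -> P) L :=
  [/\ (forall j x x', eqv n j x x' -> Z x j = Z x' j), (n <= L)%N &
      (forall j, inF n j -> forall x x', ~ eqv n j x x' -> forall w w',
         Bx (Z x) j L w -> Bx (Z x') j L w' -> H w j <> H w' j)].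

Lemma step n Z L : Inv n Z L -> exists Z' L',
  [/\ Inv n.+1 Z' L', (L <= L')%N & forall x j m, (m < L)%N -> Z' x j m = Z x j m].
Proof.
case=> S1 S2 S3.
pose B := \max_(k < n.+1) size (sval (e k)).
have [Z' [a b c]] := @level n Z L S1 B.
have hB : forall j, inF n.+1 j -> (size (sval j) <= B)%N.
  move=> j [k [hk hp]]; apply: leq_trans (pre_size hp) _.
  exact: (@leq_bigmax _ (fun k : 'I_n.+1 => size (sval (e k))) (Ordinal hk)).
have ev : \forall L' \near \oo, forall (k : 'I_n.+1) (t : 'I_(size (sval (e k))))
    (ab : A n.+1 (@pk _ _ hz (e k) t) * A n.+1 (@pk _ _ hz (e k) t)),
    ab.1 != ab.2 -> forall w w', Bx (Z' (rep ab.1)) (@pk _ _ hz (e k) t) L' w ->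
      Bx (Z' (rep ab.2)) (@pk _ _ hz (e k) t) L' w' ->
      H w (@pk _ _ hz (e k) t) <> H w' (@pk _ _ hz (e k) t).
  apply: filter_forall => k; apply: filter_forall => t; apply: filter_forall => -[al be] /=.
  have [eab|nab] := eqVneq al be.
    by apply: nearW => ? hne.
  set j := @pk _ _ hz (e k) t.
  have hne : H (Z' (rep al)) j <> H (Z' (rep be)) j.
    apply: c.
    - by exists k; split => //; exact: pk_pre.
    - by apply: hB; exists k; split => //; exact: pk_pre.
    - move=> h; move/negP: nab; apply; apply/eqP.
      by rewrite -[al](addr_rep hz) -[be](addr_rep hz); exact: addr_eq.
  have [m hm] : exists m, H (Z' (rep al)) j m <> H (Z' (rep be)) j m.
    apply: contrapT => hn; apply: hne; apply: funext => m.
    by apply: contrapT => h; apply: hn; exists m.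
  have [L1 h1] := H_stab hz cH iH (Z' (rep al)) j m.
  have [L2 h2] := H_stab hz cH iH (Z' (rep be)) j m.
  exists (maxn L1 L2) => // L' /= hL _ w w' hw hw' ew; apply: hm.
  rewrite -(h1 L' w) //; last by apply: leq_trans hL; exact: leq_maxl.
  rewrite -(h2 L' w') //; last by apply: leq_trans hL; exact: leq_maxr.
  by rewrite ew.
have ev2 : \forall L' \near \oo, (maxn L n.+1 <= L')%N.
  by exists (maxn L n.+1).
have [L' [hL' hall]] : exists L', (maxn L n.+1 <= L')%N /\
    forall (k : 'I_n.+1) (t : 'I_(size (sval (e k))))
    (ab : A n.+1 (@pk _ _ hz (e k) t) * A n.+1 (@pk _ _ hz (e k) t)),
    ab.1 != ab.2 -> forall w w', Bx (Z' (rep ab.1)) (@pk _ _ hz (e k) t) L' w ->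
      Bx (Z' (rep ab.2)) (@pk _ _ hz (e k) t) L' w' ->
      H w (@pk _ _ hz (e k) t) <> H w' (@pk _ _ hz (e k) t).
  have := filterI ev2 ev; case=> N _ hN; exists N; exact: hN N (leqnn N).
exists Z', L'; split.
- split => //; first by apply: leq_trans hL'; exact: leq_maxr.
  move=> j [k [hk hp]] x x' nx w w' hw hw'.
  have [t ej] : exists t : 'I_(size (sval (e k))), j = @pk _ _ hz (e k) t.
    by eexists; exact: (pre_pk hz hp).
  subst j.
  apply: (hall (Ordinal hk) t (addr n.+1 _ x, addr n.+1 _ x')) => /=.
  + apply/eqP => e'; apply: nx; exact (@addr_eqv _ _ hz n.+1 (@pk _ _ hz (e k) t) x x' e').
  + move=> i hi m hm; rewrite hw //; congr (_ m); apply: a.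
    apply: eqv_pre hi _; exact: (rep_eqv hz x).
  + move=> i hi m hm; rewrite hw' //; congr (_ m); apply: a.
    apply: eqv_pre hi _; exact: (rep_eqv hz x').
- by apply: leq_trans hL'; exact: leq_maxl.
- exact: b.
Qed.

Lemma Inv0 : Inv 0 (fun _ _ _ => false) 0.
Proof. by split => // j [k []]. Qed.


Lemma step' n Z L : Inv n Z L -> exists p : (P -> P) * nat,
  Inv n.+1 p.1 p.2 /\ ((L <= p.2)%N /\ forall x j m, (m < L)%N -> p.1 x j m = Z x j m).
Proof. by move=> /step [Z' [L' [h1 h2 h3]]]; exists (Z', L'). Qed.

Fixpoint seqZ (n : nat) : {p : (P -> P) * nat | Inv n p.1 p.2} :=
  match n with
  | 0 => exist _ ((fun _ _ _ => false), 0%N) Inv0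
  | n'.+1 => let q := seqZ n' in
      let r := cid (step' (proj2_sig q)) in exist _ (proj1_sig r) (proj1 (proj2_sig r))
  end.

Definition Zs n := (proj1_sig (seqZ n)).1.
Definition Ls n := (proj1_sig (seqZ n)).2.

Lemma seq_inv n : Inv n (Zs n) (Ls n).
Proof. exact: (proj2_sig (seqZ n)). Qed.

Lemma seq_next n : (Ls n <= Ls n.+1)%N /\
  forall x j m, (m < Ls n)%N -> Zs n.+1 x j m = Zs n x j m.
Proof.
rewrite /Zs /Ls /=; exact: (proj2 (proj2_sig (cid (step' (proj2_sig (seqZ n)))))).
Qed.

Lemma Ls_mono n N : (n <= N)%N -> (Ls n <= Ls N)%N.
Proof.
elim: N => [|N IH]; first by rewrite leqn0 => /eqP->.
rewrite leq_eqVlt => /orP[/eqP->//|]; rewrite ltnS => /IH h.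
exact: leq_trans h (proj1 (seq_next N)).
Qed.

Lemma Ls_ge n : (n <= Ls n)%N.
Proof. by case: (seq_inv n). Qed.

Lemma stable n N x j m : (m < Ls n)%N -> (n <= N)%N -> Zs N x j m = Zs n x j m.
Proof.
move=> hm; elim: N => [|N IH]; first by rewrite leqn0 => /eqP->.
rewrite leq_eqVlt => /orP[/eqP->//|]; rewrite ltnS => hn.
rewrite (proj2 (seq_next N)) ?IH //.
by apply: leq_trans hm (Ls_mono hn).
Qed.

Definition K (x : P) : P := fun j m => Zs m.+1 x j m.

Lemma K_Z n x i m : (m < Ls n)%N -> K x i m = Zs n x i m.
Proof.
move=> hm; rewrite /K.
have h1 : (m < Ls m.+1)%N by apply: leq_trans (Ls_ge m.+1).
rewrite -(@stable m.+1 (maxn n m.+1) x i m h1 (leq_maxr _ _)).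
by rewrite (@stable n (maxn n m.+1) x i m hm (leq_maxl _ _)).
Qed.

Hypothesis he : forall i, exists k, e k = i.

Lemma K_sep (x x' : P) j : (exists i, pre i j /\ x i <> x' i) -> H (K x) j <> H (K x') j.
Proof.
move=> [i [hi nx]].
have [m hm] : exists m, x i m <> x' i m.
  apply: contrapT => hn; apply: nx; apply: funext => m.
  by apply: contrapT => h; apply: hn; exists m.
have [k0 ek] := he j.
pose n := maxn k0.+1 m.+1.
have [_ _ S3] := seq_inv n.
apply: (S3 j _ x x') => //.
- exists k0; split; first exact: leq_maxl.
  by rewrite ek; exact: pre_refl.
- by move=> h; apply: hm; apply: h => //; exact: leq_maxr.
- by move=> i' _ m' hm'; exact: K_Z.
- by move=> i' _ m' hm'; exact: K_Z.
Qed.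

Lemma K_dep (x x' : P) j : (forall i, pre i j -> x i = x' i) -> K x j = K x' j.
Proof.
move=> h; apply: funext => m; rewrite /K.
have [S1 _ _] := seq_inv m.+1.
by rewrite (S1 j x x') // => i hi m' _; rewrite h.
Qed.

Lemma inl_In (T : eqType) (t : T) (s : seq T) : t \in s -> List.In t s.
Proof. by elim: s => //= a s IH; rewrite inE => /orP[/eqP->|/IH]; [left|right]. Qed.

Lemma K_cont : continuous K.
Proof.
apply: cont_of_bits => x j m.
pose S := [seq @pk _ _ hz j t | t <- enum 'I_(size (sval j))].
apply: filterS (box_nbhs x S m.+1) => y hy.
rewrite /K; have [S1 _ _] := seq_inv m.+1.
rewrite /=; suff -> : Zs m.+1 y j = Zs m.+1 x j by [].
apply: S1 => i hi m' hm'.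
apply: hy => //; rewrite (pre_pk hz hi); apply: List.in_map.
by apply: inl_In; rewrite mem_enum.
Qed.

End Fusion.


End Helpers.
Import Helpers.

Theorem lemma3p11 (Lab : Type) (zeta : set (seq Lab)) (X : set (Dpow zeta)) :
  inXi zeta -> IPS X ->
  exists Y : set (Dpow zeta), [/\ IPS Y, uniform Y & Y `<=` X].
Proof.
move=> hz [H [[cH injH rH [G [cG GH]]] iH]].
have [[i0 _]|nI] := pselect (exists i : {t : seq Lab | zeta t}, True); last first.
  exists X; split => //.
    by exists H; split => //; split => //; exists G.
  by move=> i; exfalso; apply: nI; exists i.
have [f finj] : exists f : seq Lab -> nat, {in zeta &, injective f}.
  apply/pcard_injP; by case: hz.
pose e := fun n : nat => match pselect (exists i : {t : seq Lab | zeta t}, f (sval i) = n) with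
  | left h => proj1_sig (cid h) | right _ => i0 end.
have he : forall i, exists k, e k = i.
  move=> i; exists (f (sval i)); rewrite /e; case: pselect => [h|h]; last first.
    by exfalso; apply: h; exists i.
  case: cid => i' /= hi'; apply: I_inj; apply: finj => //; rewrite inE.
  - exact: (svalP i').
  - exact: (svalP i).
pose KK := K hz cH iH e.
pose M := H \o KK.
have hsep : forall x x' j, (exists i, pre i j /\ x i <> x' i) -> H (KK x) j <> H (KK x') j.
  by move=> x x' j; exact: (@K_sep _ _ hz H cH iH e he x x' j).
have Kc : continuous KK := @K_cont _ _ hz H cH iH e.
have Kd : forall x x' j, (forall i, pre i j -> x i = x' i) -> KK x j = KK x' j.
  by move=> x x' j; exact: (@K_dep _ _ hz H cH iH e x x' j).
have Mc : continuous M.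
  by move=> x; apply: continuous_comp; [exact: Kc|exact: cH].
have Minj : injective M.
  move=> x x' hM; apply: funext => j; apply: contrapT => nj.
  apply: (hsep x x' j); first by exists j; split => //; exact: pre_refl.
  by have := congr1 (fun z => z j) hM.
have Mdn : forall x x' (j : {t : seq Lab | zeta t}), M x j = M x' j ->
    forall i, pre i j -> x i = x' i.
  move=> x x' j hj i hi; apply: contrapT => ni; apply: (hsep x x' j) => //.
  by exists i.
exists (range M); split.
- exists M; split.
    split => //.
    + exact: homeo_of_compact Mc Minj.
  move=> x x' xi hxi hsub; split => hr.
    apply: (proj1 (iH (KK x) (KK x') xi hxi hsub)) => t ht; apply: Kd => i hi.
    case: (pre_cases hi) => [->|hs]; first exact: hr.
    apply: hr; case: hxi => _ _ hcl; apply: (hcl _ (sval t)) => //.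
    exact: (I_ne hz).
  move=> t ht; apply: (Mdn x x' t); first exact: hr.
  exact: pre_refl.
- move=> i j hij _ _ [x _ <-] [x' _ <-] hj.
  have h := Mdn x x' j hj.
  rewrite /M /=; apply: (F1' hz iH) (sext_pre hij).
  move=> i' hi'; apply: Kd => i'' hi''; apply: h; exact: pre_trans hi'' hi'.
- by move=> _ [x _ <-]; rewrite -rH; exists (KK x).
Qed.
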